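(* Let $(G;+,\cdot)$ be a nonassociative right semiring, $n \geq 4$, and let $f, g \colon G^n \to G$ be affine functions over $(G;+,\cdot)$. If $f$ and $g$ are both linear, or if $(G;+,\cdot)$ is cancellative, then $\operatorname{deck} f = \operatorname{deck} g$ if and only if $f \equiv g$. In particular, the class of linear functions of arity at least $4$ over any nonassociative right semiring is weakly reconstructible, and if the semiring is cancellative, the class of affine functions of arity at least $4$ over it is weakly reconstructible.
   Context: A nonassociative right semiring is an algebra $(G;+,\cdot)$ such that $(G;+)$ is a commutative monoid with neutral element $0$; $(G;\cdot)$ is a groupoid (not necessarily associative) with right identity $1$; $(a+b)c = ac+bc$; and $a\cdot 0 = 0$. It is cancellative if $a+b=a+c$ implies $b=c$. A function $f\colon G^n\to G$ is affine if $f(x_1,\dots,x_n) = a_1x_1+\dots+a_nx_n+c$ for some $a_i,c\in G$; linear if this holds with $c=0$. Identification minor: for $f\colon A^n\to B$ and $I=\{i,j\}$, $i<j$, $f_I\colon A^{n-1}\to B$ is $f_I(x_1,\dots,x_{n-1}) = f(x_1,\dots,x_{j-1},x_i,x_j,\dots,x_{n-1})$. Two functions $f,g\colon A^n\to B$ are equivalent, $f\equiv g$, if $f(x_1,\dots,x_n) = g(x_{\sigma(1)},\dots,x_{\sigma(n)})$ for some permutation $\sigma$ of $\{1,\dots,n\}$. The deck of $f$ is the multiset $\langle f_I/{\equiv} : I \in \binom{[n]}{2}\rangle$ of equivalence classes of its $\binom n2$ identification minors. A class $\mathcal{C}$ of functions is weakly reconstructible if for every $f\in\mathcal{C}$, every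 $g \in \mathcal{C}$ of the same arity with $\operatorname{deck} g = \operatorname{deck} f$ satisfies $g \equiv f$. *)

(* Defs.v *)
From HB Require Import structures.
From mathcomp Require Import all_boot all_fingroup.
Set Implicit Arguments. Unset Strict Implicit. Unset Printing Implicit Defensive.

Record nrsemiring := NRSemiring {
  carrier :> Type;
  add : carrier -> carrier -> carrier;
  mul : carrier -> carrier -> carrier;
  zero : carrier;
  one : carrier;
  addA : forall a b c, add a (add b c) = add (add a b) c;
  addC : forall a b, add a b = add b a;
  add0r : forall a, add zero a = a;
  mulr1 : forall a, mul a one = a;
  mulDl : forall a b c, mul (add a b) c = add (mul a c) (mul b c);
  mulr0 : forall a, mul a zero = zero
}.

Section Defs.
Variable G : nrsemiring.

Definition cancellative : Prop :=
  forall a b c : G, add a b = add a c -> b = c.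

Definition Fn (n : nat) := ('I_n -> G) -> G.

Definition affine n (f : Fn n) : Prop :=
  exists (a : 'I_n -> G) (c : G),
    forall x, f x = add (\big[@add G/zero G]_(i < n) mul (a i) (x i)) c.

Definition linear n (f : Fn n) : Prop :=
  exists (a : 'I_n -> G),
    forall x, f x = add (\big[@add G/zero G]_(i < n) mul (a i) (x i)) (zero G).

Definition fequiv n (f g : Fn n) : Prop :=
  exists s : 'S_n, forall x : 'I_n -> G, f x = g (fun k => x (s k)).

(* 2-element subsets {i,j} of [n], represented as pairs with i < j *)
Definition pair_t n := {p : 'I_n * 'I_n | p.1 < p.2}.

(* reading of an (m)-tuple at a natural index (default 0 out of range;
   never used out of range for valid pairs) *)
Definition at_nat m (x : 'I_m -> G) (k : nat) : G :=
  match (insub k : option 'I_m) with Some o => x o | None => zero G end.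

(* identification minor f_I, I = {i,j}, i < j (0-indexed):
   f_I(x_0..x_{n-2}) = f(x_0,..,x_{j-1}, x_i, x_j,..,x_{n-2}) *)
Definition minor n (f : Fn n) (I : pair_t n) : Fn n.-1 :=
  fun x => let i := (val I).1 in let j := (val I).2 in
    f (fun k : 'I_n =>
         at_nat x (if k < j then nat_of_ord k
                   else if nat_of_ord k == nat_of_ord j then nat_of_ord i
                   else (nat_of_ord k).-1)).

(* deck f = deck g as multisets of ≡-classes: a bijection between the
   index sets of minors matching minors up to ≡ *)
Definition deck_eq n (f g : Fn n) : Prop :=
  exists s : {perm pair_t n}, forall I, fequiv (minor f I) (minor g (s I)).

Definition weakly_reconstructible (C : forall n, Fn n -> Prop) : Prop :=
  forall n (f g : Fn n), C n f -> C n g -> deck_eq g f -> fequiv g f.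

Definition linear_class_ge4 : forall n, Fn n -> Prop :=
  fun n f => 4 <= n /\ linear f.
Definition affine_class_ge4 : forall n, Fn n -> Prop :=
  fun n f => 4 <= n /\ affine f.

End Defs.

(* Main.v *)
From HB Require Import structures.
Require Import Defs.
From mathcomp Require Import all_boot all_fingroup.
From Stdlib Require Import ClassicalEpsilon Lia.
From mathcomp Require Import zify.
Set Implicit Arguments. Unset Strict Implicit. Unset Printing Implicit Defensive.

Definition ceq (A : Type) (x y : A) : bool :=
  if excluded_middle_informative (x = y) then true else false.
Lemma ceqP (A : Type) : Equality.axiom (@ceq A).
Proof. move=> x y; rewrite /ceq; case: excluded_middle_informative => h; by constructor. Qed.

HB.instance Definition _ (G : nrsemiring) := hasDecEq.Build (carrier G) (@ceqP G).

Section S.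
Variable G : nrsemiring.
Lemma addA' : associative (@add G). Proof. move=> a b c; exact: addA. Qed.
Lemma addC' : commutative (@add G). Proof. move=> a b; exact: addC. Qed.
Lemma add0' : left_id (zero G) (@add G). Proof. move=> a; exact: add0r. Qed.
End S.
HB.instance Definition _ (G : nrsemiring) := Monoid.isComLaw.Build (carrier G) (zero G) (@add G) (@addA' G) (@addC' G) (@add0' G).


Section Core.
Variable G : nrsemiring.
Local Notation "x +' y" := (@add G x y) (at level 50, left associativity).
Implicit Types (s t R U V : seq G) (x y z : G).

Fixpoint pc x s : nat :=
  if s is y :: s' then count (fun z => y +' z == x) s' + pc x s' else 0.
Definition cr x s t : nat := \sum_(y <- s) count (fun z => y +' z == x) t.
Definition E x s : nat := count (fun y => y +' y == x) s.

Lemma cr_nil x t : cr x [::] t = 0. Proof. by rewrite /cr big_nil. Qed.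
Lemma cr_cons x y s t : cr x (y :: s) t = count (fun z => y +' z == x) t + cr x s t.
Proof. by rewrite /cr big_cons. Qed.
Lemma cr_cat_r x s t1 t2 : cr x s (t1 ++ t2) = cr x s t1 + cr x s t2.
Proof. rewrite /cr -big_split /=; apply: eq_bigr => y _; exact: count_cat. Qed.
Lemma cr_sym x s t : cr x s t = cr x t s.
Proof.
elim: s => [|y s IH]; rewrite ?cr_nil ?cr_cons.
  by rewrite /cr big1 // => z _.
rewrite IH /cr /=.
rewrite big_split /=; congr (_ + _).
rewrite -sum1_count big_mkcond /=; apply: eq_bigr => z _.
by rewrite addC'; case: (_ == _).
Qed.
Lemma cr_perm_l x s1 s2 t : perm_eq s1 s2 -> cr x s1 t = cr x s2 t.
Proof. by move=> h; rewrite /cr (perm_big _ h). Qed.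
Lemma cr_perm_r x s t1 t2 : perm_eq t1 t2 -> cr x s t1 = cr x s t2.
Proof. move=> h; rewrite /cr; apply: eq_bigr => y _; exact: (seq.permP h). Qed.
Lemma pc_cr x s : (pc x s).*2 + E x s = cr x s s.
Proof.
elim: s => [|y s IH] /=; first by rewrite cr_nil.
rewrite cr_cons cr_sym cr_cons -IH /E /= -!addnn.
lia.
Qed.

Lemma pc_perm x s1 s2 : perm_eq s1 s2 -> pc x s1 = pc x s2.
Proof.
move=> h; have h1 := pc_cr x s1; have h2 := pc_cr x s2.
rewrite (cr_perm_l _ _ h) (cr_perm_r _ _ h) /E (seq.permP h) in h1.
rewrite /E in h2; rewrite -!addnn in h1 h2; move: h1 h2; set c := count _ s2; set r := cr x s2 s2; lia.
Qed.
Lemma pc_cat x s t : pc x (s ++ t) = pc x s + cr x s t + pc x t.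
Proof.
elim: s => [|y s IH] /=; first by rewrite cr_nil.
rewrite count_cat IH cr_cons; lia.
Qed.
Lemma pc_nil x : pc x [::] = 0. Proof. by []. Qed.

Lemma decomp s t : exists R U V, [/\ perm_eq s (R ++ U), perm_eq t (R ++ V)
   & forall x, x \in U -> x \notin V].
Proof.
elim: s t => [|y s IH] t.
  by exists [::], [::], t; split => //.
case yt: (y \in t).
  have [t' ht'] : exists t', perm_eq t (y :: t').
    by exists (rem y t); apply: perm_to_rem; rewrite yt.
  have [R [U [V [h1 h2 h3]]]] := IH t'.
  exists (y :: R), U, V; split => //.
    by rewrite /= perm_cons.
  by rewrite (perm_trans ht') //= perm_cons.
have [R [U [V [h1 h2 h3]]]] := IH t.
exists R, (y :: U), V; split => //.
  by rewrite perm_sym -[y :: U]cat1s perm_catCA /= perm_cons perm_sym.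
move=> x; rewrite inE => /orP [/eqP -> | /h3 //].
by apply/negP => yV; move: yt; rewrite (perm_mem h2) mem_cat yV orbT.
Qed.

Lemma sumcnt (A : eqType) (X : seq G) (f : A -> G) (L : seq A) : uniq X ->
  \sum_(x <- X) count (fun w => f w == x) L = count (fun w => f w \in X) L.
Proof.
move=> uX; elim: L => [|w L IH] /=.
  by rewrite big1 // => x _.
rewrite big_split /= IH; congr (_ + _).
rewrite -(count_uniq_mem (f w) uX) -sum1_count [RHS]big_mkcond /=.
by apply: eq_bigr => x _; rewrite eq_sym; case: (_ == _).
Qed.

Lemma sumcr (X : seq G) R V : uniq X -> \sum_(x <- X) cr x R V <= size R * size V.
Proof.
move=> uX; rewrite /cr exchange_big /=.
elim: R => [|y R IH] /=; first by rewrite big_nil.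
rewrite big_cons mulSn leq_add //.
rewrite sumcnt //; exact: count_size.
Qed.

Lemma sumpc (X : seq G) V : uniq X -> (\sum_(x <- X) pc x V).*2 <= size V * (size V).-1.
Proof.
move=> uX; elim: V => [|y V IH] /=; first by rewrite big1.
rewrite big_split /= sumcnt // doubleD.
have := count_size (fun z => y +' z \in X) V.
case: (size V) IH => [|m] /=; rewrite ?muln0 => IH h; first by lia.
move: h IH; set c := count _ V; set S := \sum_(i <- X) _; nia.
Qed.

Lemma cr1 x R v : cr x R [:: v] = count (fun y => y +' v == x) R.
Proof. elim: R => [|y R IH]; rewrite ?cr_nil ?cr_cons //= IH; lia. Qed.

Lemma key R U V n K : size R + size U = n -> size V = size U -> 4 <= n ->
  K.*2 = n.-1 * n.-2 -> (forall x, x \in U -> x \notin V) ->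
  (forall x, K * count_mem x U + cr x R U + pc x U =
             K * count_mem x V + cr x R V + pc x V) ->
  U = [::] \/ exists u v, [/\ U = [:: u], V = [:: v], size R = 3
                             & all (fun r => r +' v == u) R].
Proof.
move=> hn hV h4 hK hUV H.
case EU: U => [|u U']; first by left.
right; rewrite -EU.
set d := size U.
have d1 : 1 <= d by rewrite /d EU.
pose X := undup U.
have uX : uniq X := undup_uniq U.
have S : \sum_(x <- X) (K * count_mem x U + cr x R U + pc x U) =
         \sum_(x <- X) (K * count_mem x V + cr x R V + pc x V).
  by apply: eq_bigr => x _; exact: H.
rewrite !big_split /= -!big_distrr /= in S.
have cU : \sum_(x <- X) count_mem x U = d.
  rewrite (sumcnt id U uX) /d; apply/eqP; rewrite -all_count.
  by apply/allP => w wU /=; rewrite mem_undup.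
have cV : \sum_(x <- X) count_mem x V = 0.
  rewrite (sumcnt id V uX); apply/eqP; rewrite -leqn0 leqNgt -has_count.
  apply/hasPn => w wV /=; rewrite mem_undup; apply/negP => wU.
  by move: (hUV _ wU); rewrite wV.
rewrite cU cV muln0 add0n in S.
have b1 := sumcr R V uX.
have b2 := sumpc V uX.
have hd : d = 1 /\ n = 4.
  move: S b1 b2; rewrite hV -/d.
  set A := \sum_(i <- X) cr i R U; set B := \sum_(i <- X) pc i U.
  set A' := \sum_(i <- X) cr i R V; set B' := \sum_(i <- X) pc i V.
  move=> S b1 b2.
  have : K.*2 * d <= (size R * d).*2 + d * d.-1 by lia.
  rewrite hK doubleMl [d * _]mulnC -mulnDl leq_pmul2r // => h.
  have hR : size R = n - d by lia.
  have dn : d <= n by lia.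
  rewrite hR in h; clear -d1 h4 h dn; move: h dn.
  have [m ->] : exists m, n = m + 4 by exists (n - 4); lia.
  rewrite addn4 /=.
  have -> : m.+3 * m.+2 = m * m + 5 * m + 6.
    by rewrite !mulSn !mulnS; lia.
  have : m <= m * m by case: m => // m; rewrite leq_pmulr.
  lia.
case: hd => d_1 n4.
clear S b1 b2 cU cV.
have K3 : K = 3 by move: hK; rewrite n4 /=; lia.
case: U' EU d_1 hV => [|? ?] EU; rewrite /d EU //= => _.
case: V hUV H => [|v [|? ?]] //= hUV H _.
have uv : u != v by have := hUV u; rewrite EU !inE eqxx /= => /(_ isT).
have := H u; rewrite EU !cr1 /= eqxx eq_sym (negbTE uv) /=.
have sR : size R = 3 by move: hn; rewrite EU /=; lia.
have := count_size (fun y => y +' v == u) R; rewrite sR => hc.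
move=> h; exists u, v; split => //.
rewrite all_count sR; apply/eqP; move: h hc; rewrite K3; set c := count _ R; set c' := count _ R; lia.
Qed.

Lemma addr0' x : x +' zero G = x. Proof. by rewrite addC' add0'. Qed.

Lemma core s t n K : size s = n -> size t = n -> 4 <= n -> K.*2 = n.-1 * n.-2 ->
  (forall x, K * count_mem x s + pc x s = K * count_mem x t + pc x t) ->
  \big[@add G/zero G]_(y <- s) y = \big[@add G/zero G]_(y <- t) y -> perm_eq s t.
Proof.
move=> hs ht h4 hK H hsum.
have [R [U [V [h1 h2 h3]]]] := decomp s t.
have H' : forall x, K * count_mem x U + cr x R U + pc x U =
             K * count_mem x V + cr x R V + pc x V.
  move=> x; have := H x.
  rewrite (seq.permP h1) (seq.permP h2) (pc_perm _ h1) (pc_perm _ h2) !count_cat !pc_cat.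
  rewrite !mulnDr; lia.
have sU : size R + size U = n by rewrite -size_cat -(perm_size h1).
have sV : size V = size U.
  by move: sU; rewrite -ht (perm_size h2) size_cat => /eqP; rewrite eqn_add2l => /eqP ->.
have h3' : forall x, x \in V -> x \notin U.
  by move=> x xV; apply/negP => xU; move: (h3 _ xU); rewrite xV.
case: (key sU sV h4 hK h3 H') => [U0 | [u [v [EU EV sR hR]]]].
  move: sV h2; rewrite U0; case: V {h3 h3' H'} => [_ h2|] //.
  rewrite U0 cats0 in h1; rewrite cats0 in h2; apply: (perm_trans h1); by rewrite perm_sym.
have sU' : size R + size V = n by rewrite sV.
have H'' : forall x, K * count_mem x V + cr x R V + pc x V =
             K * count_mem x U + cr x R U + pc x U by move=> x; rewrite H'.
case: (key sU' (esym sV) h4 hK h3' H'') => [V0 | [v' [u' [EV' EU' _ hR']]]].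
  by rewrite V0 in EV.
rewrite EV in EV'; rewrite EU in EU'; case: EV' => ev; case: EU' => eu; subst v' u'.
move: hsum; rewrite (perm_big _ h1) (perm_big _ h2) EU EV.
case: R sR hR hR' {H' H'' sU sU' h1 h2} => [|r1 [|r2 [|r3 [|? ?]]]] //= _.
rewrite !andbT => /and3P [/eqP e1 /eqP e2 /eqP e3] /and3P [/eqP f1 /eqP f2 /eqP f3].
rewrite !big_cons !big_nil !addr0' f3 e2 f1 e3 f2 e1 => uv.
by have := h3 u; rewrite EU EV !inE eqxx uv eqxx => /(_ isT).
Qed.
End Core.

Section Fun.
Variable G : nrsemiring.
Local Notation "x +' y" := (@add G x y) (at level 50, left associativity).
Local Notation "x *' y" := (@mul G x y) (at level 40, left associativity).

Lemma cnt_ord m (F : 'I_m -> G) x :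
  count_mem x (map F (enum 'I_m)) = \sum_(k < m) (F k == x).
Proof.
rewrite count_map -sum1_count big_enum_cond /= big_mkcond /=.
by apply: eq_bigr => k _; case: (_ == _).
Qed.

Lemma sum_ord m (F : 'I_m -> G) :
  \big[@add G/zero G]_(y <- map F (enum 'I_m)) y = \big[@add G/zero G]_(k < m) F k.
Proof. by rewrite big_map big_enum. Qed.

Definition rep n (f : Fn G n) (a : 'I_n -> G) (c : G) :=
  forall x, f x = add (\big[@add G/zero G]_(i < n) Defs.mul (a i) (x i)) c.

Lemma sum_mul0 n (a : 'I_n -> G) : \big[@add G/zero G]_(i < n) Defs.mul (a i) (zero G) = zero G.
Proof. by rewrite big1 // => i _; rewrite Defs.mulr0. Qed.

Lemma sum_e n (a : 'I_n -> G) (i : 'I_n) :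
  \big[@add G/zero G]_(k < n) Defs.mul (a k) (if k == i then Defs.one G else zero G) = a i.
Proof.
rewrite (bigD1 i) //= eqxx Defs.mulr1 big1 ?addr0' // => k /negbTE ->; exact: Defs.mulr0.
Qed.

Lemma rep_unique n (f : Fn G n) a c a' c' : rep f a c -> rep f a' c' ->
  (cancellative G \/ c = zero G) -> c = c' /\ a =1 a'.
Proof.
move=> h h' Q.
have cc : c = c'.
  by have := h (fun _ => zero G); rewrite h' !sum_mul0 !add0'.
split=> // i; have := h (fun k => if k == i then Defs.one G else zero G).
rewrite h' !sum_e -cc; case: Q => [canc | ->]; last by rewrite !addr0'.
by rewrite !(addC' _ c) => /esym e; exact: (canc c).
Qed.

Lemma perm_ex n (a b : 'I_n -> G) :
  perm_eq (map a (enum 'I_n)) (map b (enum 'I_n)) ->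
  exists p : 'S_n, forall i, a i = b (p i).
Proof.
move=> h.
have h' : perm_eq (map a (enum 'I_n)) [tuple b i | i < n].
  by [].
have [p e] := tuple_permP h'; exists p => i.
have := congr1 (fun s => nth (a i) s i) e.
rewrite /= !(nth_map i) -?enumT ?size_enum_ord // nth_ord_enum.
by rewrite tnth_map tnth_ord_tuple.
Qed.

Lemma perm_enum_map n (h : 'I_n -> 'I_n) : injective h ->
  perm_eq (map h (enum 'I_n)) (enum 'I_n).
Proof.
move=> hi; apply: uniq_perm; [rewrite map_inj_uniq //; exact: enum_uniq | exact: enum_uniq |].
move=> k; rewrite mem_enum inE; apply/mapP.
have [k' _ ->] : exists2 k', true & k = h k'.
  have: k \in codom h by rewrite (inj_card_onto hi) ?codom_f // card_ord.
  by case/codomP => k' ->; exists k'.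
by exists k'; rewrite ?mem_enum.
Qed.

Lemma rep_perm n (f g : Fn G n) a b c : rep f a c -> rep g b c ->
  perm_eq (map a (enum 'I_n)) (map b (enum 'I_n)) -> fequiv f g.
Proof.
move=> hf hg /perm_ex [p hp]; exists p^-1%g => x.
rewrite hf hg; congr (add _ c).
rewrite [in RHS](reindex_inj (@perm_inj _ p)) /=.
by apply: eq_bigr => i _; rewrite hp permK.
Qed.

Lemma fequiv_perm n (f g : Fn G n) a b c c' : rep f a c -> rep g b c' ->
  (cancellative G \/ c = zero G) -> fequiv f g ->
  c = c' /\ perm_eq (map a (enum 'I_n)) (map b (enum 'I_n)).
Proof.
move=> hf hg Q [s hs].
have hf' : rep f (fun i => b (s^-1%g i)) c'.
  move=> x; rewrite hs hg; congr (add _ c').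
  rewrite (reindex_inj (@perm_inj _ s^-1%g)) /=.
  by apply: eq_bigr => i _; rewrite permKV.
have [-> e] := rep_unique hf hf' Q; split => //.
rewrite (eq_map e) -[X in perm_eq _ X](map_id) -map_comp.
rewrite (map_comp b) perm_map //; exact: perm_enum_map (@perm_inj _ _).
Qed.

Lemma at_nat_val m (x : 'I_m -> G) (k : 'I_m) : at_nat x k = x k.
Proof.
rewrite /at_nat; case: insubP => [k' _ /val_inj -> // |]; by rewrite ltn_ord.
Qed.

Lemma iord_lt n (I : pair_t n) : (sval I).1 < n.-1.
Proof. case: I => [[i j] /= h1]; have := ltn_ord j; lia. Qed.

Definition iord n (I : pair_t n) : 'I_n.-1 := Ordinal (iord_lt I).

Definition beta n (a : 'I_n -> G) (I : pair_t n) (m : 'I_n.-1) : G :=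
  if m == iord I then add (a (lift (sval I).2 m)) (a (sval I).2) else a (lift (sval I).2 m).

Lemma lift_iord n (I : pair_t n) : lift (sval I).2 (iord I) = (sval I).1.
Proof.
apply: val_inj => /=; rewrite /bump; have h1 := valP I; simpl in h1.
by rewrite leqNgt h1.
Qed.

Lemma minor_rep n (f : Fn G n) a c (I : pair_t n) :
  rep f a c -> rep (minor f I) (beta a I) c.
Proof.
move=> h x; rewrite /minor h; congr (add _ c).
set i := (val I).1; set j := (val I).2.
rewrite (bigD1_ord j) //= ltnn eqxx.
have -> : at_nat x i = x (iord I) by rewrite -at_nat_val.
have yl : forall m : 'I_n.-1, at_nat x (if bump j m < j then bump j m
     else if bump j m == j then (i : nat) else (bump j m).-1) = x m.
  move=> m; rewrite /bump; case: (leqP j m) => hm /=.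
    have -> : (1 + m < j) = false by apply/negbTE; rewrite -leqNgt; lia.
    have -> : (1 + m == j) = false by apply/negbTE; apply/eqP; lia.
    by rewrite ?add0n at_nat_val.
  by rewrite ?add0n ?hm /= ?add0n at_nat_val.
rewrite (eq_bigr (fun m => Defs.mul (a (lift j m)) (x m))); last by move=> m _; rewrite yl.
rewrite [in RHS](bigD1 (iord I)) //= /beta eqxx [in LHS](bigD1 (iord I)) //=.
rewrite Defs.mulDl; set r1 := \big[_/_]_(i0 < n.-1 | _) _; set r2 := \big[_/_]_(i0 < n.-1 | _) _.
have -> : r2 = r1 by apply: eq_bigr => m /negbTE ->.
by rewrite !addA' (addC' (Defs.mul (a j) _)).
Qed.

Lemma psum n (F : 'I_n -> 'I_n -> nat) :
  \sum_(I : pair_t n) F (sval I).1 (sval I).2 = \sum_(i < n) \sum_(j < n | i < j) F i j.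
Proof.
rewrite -(big_sub (fun p : 'I_n * 'I_n => p.1 < p.2) (fun p => F p.1 p.2)).
by rewrite pair_big_dep.
Qed.

Lemma split_row n (F : 'I_n -> 'I_n -> nat) i :
  \sum_(j < n) F i j = \sum_(j < n | i < j) F i j + \sum_(j < n | j < i) F i j + F i i.
Proof.
rewrite (bigD1 i) //= [RHS]addnC; congr (_ + _).
rewrite [LHS](bigID (fun j : 'I_n => i < j)) /=; congr (_ + _); apply: eq_bigl => j.
  by rewrite andb_idl // => h; apply/negP => /eqP e; rewrite e ltnn in h.
by rewrite -leqNgt ltn_neqAle.
Qed.

Lemma tri n (F : 'I_n -> 'I_n -> nat) :
  \sum_(i < n) \sum_(j < n) F i j =
  \sum_(i < n) \sum_(j < n | i < j) (F i j + F j i) + \sum_(i < n) F i i.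
Proof.
rewrite (eq_bigr _ (fun i _ => split_row F i)) !big_split /=; congr (_ + _).
rewrite [RHS](eq_bigr (fun i : 'I_n => \sum_(j < n | i < j) F i j + \sum_(j < n | i < j) F j i));
  last by move=> i _; rewrite big_split.
rewrite big_split /=; congr (_ + _).
by rewrite (exchange_big_dep xpredT) //=.
Qed.

Lemma card_count n (a : 'I_n -> G) (I : pair_t n) x :
  count_mem x (map (beta a I) (enum 'I_n.-1)) + (a (sval I).1 == x) + (a (sval I).2 == x) =
  (add (a (sval I).1) (a (sval I).2) == x) + count_mem x (map a (enum 'I_n)).
Proof.
rewrite !cnt_ord (bigD1 (iord I)) //= {1}/beta eqxx (lift_iord I).
rewrite (bigD1_ord (sval I).2) //= [in RHS](bigD1 (iord I)) //= (lift_iord I).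
set s1 := \sum_(i < n.-1 | i != iord I) _; set s2 := \sum_(i < n.-1 | i != iord I) _.
have -> : s1 = s2 by apply: eq_bigr => m /negbTE; rewrite /beta => ->.
lia.
Qed.

Lemma card_sum n (a : 'I_n -> G) (I : pair_t n) :
  \big[@add G/zero G]_(m < n.-1) beta a I m = \big[@add G/zero G]_(k < n) a k.
Proof.
rewrite (bigD1 (iord I)) //= {1}/beta eqxx (lift_iord I).
rewrite [RHS](bigD1_ord (sval I).2) //= [in RHS](bigD1 (iord I)) //= (lift_iord I).
set s1 := \big[_/_]_(i < n.-1 | i != iord I) _; set s2 := \big[_/_]_(i < n.-1 | i != iord I) _.
have -> : s1 = s2 by apply: eq_bigr => m /negbTE; rewrite /beta => ->.
by rewrite addA' (addC' (a (sval I).2)).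
Qed.

Lemma cnt_ordP m (F : 'I_m -> G) (P : pred G) :
  count P (map F (enum 'I_m)) = \sum_(k < m) P (F k).
Proof.
rewrite count_map -sum1_count big_enum_cond /= big_mkcond /=.
by apply: eq_bigr => k _; rewrite /preim /=; case: (P _).
Qed.

Definition Pn n := \sum_(i < n) \sum_(j < n | i < j) 1.

Lemma Pn2 n : (Pn n).*2 + n = n * n.
Proof.
have h := tri (fun _ _ : 'I_n => 1).
have a1 : \sum_(i < n) \sum_(j < n) 1 = n * n.
  rewrite (eq_bigr (fun _ => n)) ?big_const_ord ?iter_addn_0 // => i _.
  by rewrite mul1n.
have a2 : \sum_(i < n) \sum_(j < n | i < j) (1 + 1) = (Pn n).*2.
  rewrite /Pn -addnn -big_split; apply: eq_bigr => i _; by rewrite big_split.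
have a3 : \sum_(i < n) 1 = n by rewrite big_const_ord iter_addn_0 mul1n.
by rewrite -a2 -a1 h a3.
Qed.

Lemma deck_count n (a : 'I_n -> G) x :
  \sum_(I : pair_t n) count_mem x (map (beta a I) (enum 'I_n.-1)) +
     n.-1 * count_mem x (map a (enum 'I_n))
   = Pn n * count_mem x (map a (enum 'I_n)) + pc x (map a (enum 'I_n)).
Proof.
set m := count_mem x _.
have h : \sum_(I : pair_t n) (count_mem x (map (beta a I) (enum 'I_n.-1)) +
     (a (sval I).1 == x) + (a (sval I).2 == x)) =
   \sum_(I : pair_t n) ((add (a (sval I).1) (a (sval I).2) == x) + m).
  by apply: eq_bigr => I _; rewrite card_count.
rewrite !big_split /= in h.
rewrite (psum (fun i j => a i == x)) (psum (fun i j => a j == x)) in h.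
rewrite (psum (fun i j => add (a i) (a j) == x)) in h.
rewrite (psum (fun i j => m)) in h.
have h1 := tri (fun i j : 'I_n => (a i == x) : nat).
have h2 := tri (fun i j : 'I_n => (add (a i) (a j) == x) : nat).
have mE : m = \sum_(i < n) (a i == x) by rewrite /m cnt_ord.
have e1 : \sum_(i < n) \sum_(j < n) ((a i == x) : nat) = n * m.
  rewrite mE big_distrr /=; apply: eq_bigr => i _.
  by rewrite sum_nat_const card_ord mulnC.
have e2 : \sum_(i < n) \sum_(j < n) ((add (a i) (a j) == x) : nat) =
          cr x (map a (enum 'I_n)) (map a (enum 'I_n)).
  rewrite /cr big_map big_enum /=; apply: eq_bigr => i _.
  by rewrite cnt_ordP.
have e3 : \sum_(i < n) ((add (a i) (a i) == x) : nat) = E x (map a (enum 'I_n)).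
  by rewrite /E cnt_ordP.
have pcE := pc_cr x (map a (enum 'I_n)).
have e4 : \sum_(i < n) \sum_(j < n | i < j) m = Pn n * m.
  rewrite /Pn big_distrl /=; apply: eq_bigr => i _; by rewrite big_distrl /= mul1n.
set Q := \sum_(i < n) \sum_(j < n | i < j) ((add (a i) (a j) == x) : nat).
have hQ : \sum_(i < n) \sum_(j < n | i < j) (((add (a i) (a j) == x) : nat) + (add (a j) (a i) == x))
   = Q.*2.
  rewrite /Q -addnn -big_split; apply: eq_bigr => i _; rewrite -big_split.
  by apply: eq_bigr => j _; rewrite addC'.
have hA : \sum_(i < n) \sum_(j < n | i < j) (((a i == x) : nat) + (a j == x)) =
   \sum_(i < n) \sum_(j < n | i < j) ((a i == x) : nat) +
   \sum_(i < n) \sum_(j < n | i < j) ((a j == x) : nat).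
  by rewrite -big_split; apply: eq_bigr => i _; rewrite -big_split.
rewrite hQ e2 e3 -pcE in h2.
rewrite hA e1 -mE in h1.
rewrite e4 in h.
have nm : n * m = n.-1 * m + m.
  case: n a m mE {h h1 h2 e1 e2 e3 e4 hQ hA pcE Q} => [|n'] a m mE.
    by rewrite mE big_ord0.
  by rewrite mulSn addnC.
move: h h1 h2; set S := \sum_(I : pair_t n) _.
set A := \sum_(i < n) \sum_(j < n | i < j) ((a i == x) : nat).
set B := \sum_(i < n) \sum_(j < n | i < j) ((a j == x) : nat).
set pp := pc _ _; set EE := E _ _.
lia.
Qed.


Lemma deck_to_perm n (a b : 'I_n -> G) : 4 <= n ->
  (forall x, \sum_(I : pair_t n) count_mem x (map (beta a I) (enum 'I_n.-1)) =
             \sum_(I : pair_t n) count_mem x (map (beta b I) (enum 'I_n.-1))) ->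
  \big[@add G/zero G]_(k < n) a k = \big[@add G/zero G]_(k < n) b k ->
  perm_eq (map a (enum 'I_n)) (map b (enum 'I_n)).
Proof.
move=> h4 H hs.
have P2 := Pn2 n.
have Pge : n.-1 <= Pn n.
  move: P2; have [k ->] : exists k, n = k.+2 by exists (n - 2); lia.
  have -> : k.+2 * k.+2 = k * k + 4 * k + 4 by rewrite !mulSn !mulnS; lia.
  move=> /=; lia.
apply: (@core G _ _ n (Pn n - n.-1));
  [by rewrite size_map size_enum_ord | by rewrite size_map size_enum_ord | by [] | | |].
- have [k ek] : exists k, n = k.+2 by exists (n - 2); lia.
  move: P2 h4; rewrite ek.
  have -> : k.+2 * k.+2 = k * k + 4 * k + 4 by rewrite !mulSn !mulnS; lia.
  have -> : k.+1 * k = k * k + k by rewrite mulSn; lia.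
  move=> /= P2 _; lia.
- move=> x; have ha := deck_count a x; have hb := deck_count b x.
  rewrite H in ha; rewrite !mulnBl.
  have l1 := leq_mul Pge (leqnn (count_mem x (map a (enum 'I_n)))).
  have l2 := leq_mul Pge (leqnn (count_mem x (map b (enum 'I_n)))).
  move: ha hb l1 l2; set S := \sum_(I : pair_t n) _.
  set ma := count_mem x (map a _); set mb := count_mem x (map b _).
  set pa := pc x (map a _); set pb := pc x (map b _). lia.
- by rewrite !sum_ord.
Qed.

Definition pimg n (p : 'S_n) (I : pair_t n) : pair_t n :=
  let u := p (sval I).1 in let w := p (sval I).2 in
  odflt I (insub (if u < w then (u, w) else (w, u))).

Lemma pimgE n (p : 'S_n) (I : pair_t n) :
  let u := p (sval I).1 in let w := p (sval I).2 in
  sval (pimg p I) = if u < w then (u, w) else (w, u).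
Proof.
have uw : p (sval I).1 != p (sval I).2.
  rewrite (inj_eq (@perm_inj _ p)); case: I => [[i j] /= h].
  by apply/eqP => e; rewrite e ltnn in h.
move=> u w; rewrite /pimg -/u -/w.
case: insubP => [J _ -> //| /=].
move: uw; rewrite -/u -/w; case: (ltngtP u w) => [h|h|h] /=; rewrite ?h //.
by move=> /negP []; apply/eqP/val_inj.
Qed.

Lemma pimg_inj n (p : 'S_n) : injective (pimg p).
Proof.
move=> I J e; have := congr1 sval e; rewrite !pimgE.
case: I J {e} => [[i j] hij] [[i' j'] hij'] /=; simpl in hij, hij'.
move=> e; apply: val_inj => /=; move: e.
case: ifP => _; case: ifP => _ [] /perm_inj e1 /perm_inj e2; subst => //;
  by move: hij hij'; rewrite ltnNge => /negP; rewrite leq_eqVlt => /[swap] ->; rewrite orbT.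
Qed.

Lemma card_perm_count n (a b : 'I_n -> G) (p : 'S_n) (I : pair_t n) x :
  (forall i, a i = b (p i)) ->
  count_mem x (map a (enum 'I_n)) = count_mem x (map b (enum 'I_n)) ->
  count_mem x (map (beta a I) (enum 'I_n.-1)) =
  count_mem x (map (beta b (pimg p I)) (enum 'I_n.-1)).
Proof.
move=> hp hm; have h1 := card_count a I x; have h2 := card_count b (pimg p I) x.
rewrite pimgE in h2; rewrite !hp hm in h1.
move: h1 h2; case: ifP => _ /=; last rewrite (addC' (b (p (sval I).2))).
  set c1 := count_mem x (map (beta a I) _); set c2 := count_mem x (map (beta b _) _).
  set m := count_mem x (map b _); lia.
set c1 := count_mem x (map (beta a I) _); set c2 := count_mem x (map (beta b _) _).
set m := count_mem x (map b _); lia.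
Qed.

Lemma get_rep n (f : Fn G n) : affine f -> (linear f \/ cancellative G) ->
  exists a c, rep f a c /\ (cancellative G \/ c = zero G).
Proof.
move=> [a [c h]] [[a' h'] | canc].
  by exists a', (zero G); split => //; right.
by exists a, c; split => //; left.
Qed.

Lemma count_perm (s t : seq G) : (forall x, count_mem x s = count_mem x t) -> perm_eq s t.
Proof. by move=> h; apply/allP => x _; apply/eqP. Qed.

Lemma part1 n (f g : Fn G n) : 4 <= n -> affine f -> affine g ->
  ((linear f /\ linear g) \/ cancellative G) -> (deck_eq f g <-> fequiv f g).
Proof.
move=> h4 af ag hyp.
have [a [c [hf Qf]]] : exists a c, rep f a c /\ (cancellative G \/ c = zero G).
  by apply: get_rep => //; case: hyp => [[]|]; [left | right].
have [b [c' [hg Qg]]] : exists a c, rep g a c /\ (cancellative G \/ c = zero G).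
  by apply: get_rep => //; case: hyp => [[]|]; [left | right].
have h0 : 0 < n by lia.
have h1 : 1 < n by lia.
pose I0 : pair_t n := exist _ (Ordinal h0, Ordinal h1) isT.
split.
- move=> [pi hpi].
  have key I := fequiv_perm (minor_rep I hf) (minor_rep (pi I) hg) Qf (hpi I).
  have cc : c = c' by case: (key I0).
  subst c'.
  apply: (rep_perm hf hg); apply: deck_to_perm => //.
    move=> x; rewrite [RHS](reindex_inj (@perm_inj _ pi)) /=.
    by apply: eq_bigr => I _; case: (key I) => _ /seq.permP ->.
  rewrite -(card_sum a I0) -(card_sum b (pi I0)) -!sum_ord.
  by case: (key I0) => _ /(perm_big _) ->.
- move=> hfg; have [cc hperm] := fequiv_perm hf hg Qf hfg; subst c'.
  have [p hp] := perm_ex hperm.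
  exists (perm (@pimg_inj n p)) => I; rewrite permE.
  apply: (rep_perm (minor_rep I hf) (minor_rep (pimg p I) hg)).
  apply: count_perm => x; apply: card_perm_count => //.
  exact: (seq.permP hperm).
Qed.
End Fun.

Theorem mainTheorem12 (G : nrsemiring) :
  (forall (n : nat) (f g : Fn G n),
     4 <= n -> affine f -> affine g ->
     ((linear f /\ linear g) \/ cancellative G) ->
     (deck_eq f g <-> fequiv f g))
  /\ weakly_reconstructible (@linear_class_ge4 G)
  /\ (cancellative G -> weakly_reconstructible (@affine_class_ge4 G)).
Proof.
have lin_aff : forall n (f : Fn G n), linear f -> affine f.
  by move=> n f [a h]; exists a, (zero G).
split; first exact: part1.
split.
  move=> n f g [h4 lf] [_ lg] d.
  by apply/(part1 h4 (lin_aff _ _ lg) (lin_aff _ _ lf)); first by left.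
move=> canc n f g [h4 af] [_ ag] d.
by apply/(part1 h4 ag af); first by right.
Qed.
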